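(* Assume $\delta<d$, $\gamma\ge1$ and $\alpha=\gamma/(\delta-d)$. Then $$G_z^\alpha(w)=G_h(z^{-\alpha}w)+o(1)\quad\text{as } z\to\infty,$$ i.e. for every $\epsilon>0$ there is $R>0$ such that $|G_z^\alpha(w)-G_h(z^{-\alpha}w)|<\epsilon$ for all $(z,w)$ with $|z|>R$.
   Context: Let $p(z)=z^\delta+O(z^{\delta-1})$ be a monic polynomial of degree $\delta\ge 2$, and let $q(z,w)=b(z)w^d+(\text{terms of lower degree in } w)$ be a polynomial with $d=\deg_w q\ge 2$, where $b$ is a monic polynomial of degree $\gamma$. Let $f(z,w)=(p(z),q(z,w))$. Write $Q_z^n=q_{p^{n-1}(z)}\circ\cdots\circ q_{p(z)}\circ q_z$ with $q_z=q(z,\cdot)$. For $\delta<d$, $\alpha=\max\big(\{-\gamma/(d-\delta)\}\cup\{(n_j-\gamma)/(d-m_j)\}\big)$, the second set over monomials $z^{n_j}w^{m_j}$ appearing in $q$ with nonzero coefficient and $m_j<d$. $G_z^\alpha(w)=\lim_{n\to\infty}d^{-n}\log^+\big(|Q_z^n(w)|/|p^n(z)|^\alpha\big)$. Give the monomial $z^nw^m$ weight $n+\alpha m$; let $h(z,w)$ be the sum of those terms of $q$ of weight exactly $\gamma+\alpha d$ (the maximal weight; it contains $z^\gamma w^d$), and $h(c)=h(1,c)$, a one-variable polynomial of degree $d$, with Green function $G_h(c)=\lim_{n\to\infty}d^{-n}\log^+|h^n(c)|$. The value $G_h(z^{-\alpha}w)$ does not depend on the choice of branch of $z^{-\alpha}$.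 *)

(* Defs.v *)
From Stdlib Require Import Reals Lra List Classical ClassicalEpsilon.
Open Scope R_scope.

Definition Cx := (R * R)%type.
Definition Cx0 : Cx := (0, 0).
Definition Cx1 : Cx := (1, 0).
Definition Cadd (a b : Cx) : Cx := (fst a + fst b, snd a + snd b).
Definition Cmul (a b : Cx) : Cx :=
  (fst a * fst b - snd a * snd b, fst a * snd b + snd a * fst b).
Definition Cscal (r : R) (a : Cx) : Cx := (r * fst a, r * snd a).
Fixpoint Cpow (a : Cx) (n : nat) : Cx :=
  match n with O => Cx1 | S k => Cmul a (Cpow a k) end.
Definition Cnorm (a : Cx) : R := sqrt (fst a * fst a + snd a * snd a).
Definition Cexp (a : Cx) : Cx := (exp (fst a) * cos (snd a), exp (fst a) * sin (snd a)).

Fixpoint Csum (n : nat) (f : nat -> Cx) : Cx :=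
  match n with O => f O | S k => Cadd (Csum k f) (f (S k)) end.

Definition peval (delta : nat) (pc : nat -> Cx) (z : Cx) : Cx :=
  Csum delta (fun k => Cmul (pc k) (Cpow z k)).
Fixpoint piter (delta : nat) (pc : nat -> Cx) (n : nat) (z : Cx) : Cx :=
  match n with O => z | S k => peval delta pc (piter delta pc k z) end.

Definition qeval (N d : nat) (qc : nat -> nat -> Cx) (z w : Cx) : Cx :=
  Csum N (fun n => Csum d (fun m => Cmul (qc n m) (Cmul (Cpow z n) (Cpow w m)))).

(* Q_z^n(w) = q_{p^{n-1}(z)} o ... o q_z (w) *)
Fixpoint Qiter (delta : nat) (pc : nat -> Cx) (N d : nat) (qc : nat -> nat -> Cx)
    (n : nat) (z w : Cx) : Cx :=
  match n with
  | O => w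
  | S k => qeval N d qc (piter delta pc k z) (Qiter delta pc N d qc k z w)
  end.

Definition logplus (x : R) : R := Rmax 0 (ln x).

(* the limit of a real sequence (if it exists; 0 otherwise) *)
Definition seq_lim (u : nat -> R) : R :=
  match excluded_middle_informative (exists l, Un_cv u l) with
  | left H => proj1_sig (constructive_indefinite_description _ H)
  | right _ => 0
  end.

(* alpha = max({-gamma/(d-delta)} U {(n_j-gamma)/(d-m_j)}), over monomials
   z^n w^m of q with nonzero coefficient and m < d *)
Definition alpha_of (delta gamma N d : nat) (qc : nat -> nat -> Cx) : R :=
  let base := - INR gamma / (INR d - INR delta) in
  fold_right Rmax base
    (flat_map (fun n =>
       map (fun m =>
         if excluded_middle_informative (qc n m = Cx0) then base
         else (INR n - INR gamma) / (INR d - INR m))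
       (seq 0 d))
     (seq 0 (S N))).

(* coefficients of h(c) = h(1,c): sum of terms of q of weight n + alpha m
   equal to gamma + alpha d *)
Definition hcoef (alpha : R) (gamma N : nat) (d : nat) (qc : nat -> nat -> Cx)
    (m : nat) : Cx :=
  Csum N (fun n =>
    if Req_EM_T (INR n + alpha * INR m) (INR gamma + alpha * INR d)
    then qc n m else Cx0).

Definition heval (alpha : R) (gamma N d : nat) (qc : nat -> nat -> Cx) (c : Cx) : Cx :=
  Csum d (fun m => Cmul (hcoef alpha gamma N d qc m) (Cpow c m)).

Fixpoint hiter (alpha : R) (gamma N d : nat) (qc : nat -> nat -> Cx) (n : nat) (c : Cx) : Cx :=
  match n with O => c | S k => heval alpha gamma N d qc (hiter alpha gamma N d qc k c) end.

Definition Gh (alpha : R) (gamma N d : nat) (qc : nat -> nat -> Cx) (c : Cx) : R :=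
  seq_lim (fun n => / (INR d ^ n) * logplus (Cnorm (hiter alpha gamma N d qc n c))).

Definition Galpha (alpha : R) (delta : nat) (pc : nat -> Cx) (N d : nat)
    (qc : nat -> nat -> Cx) (z w : Cx) : R :=
  seq_lim (fun n => / (INR d ^ n) *
    logplus (Cnorm (Qiter delta pc N d qc n z w) /
             Rpower (Cnorm (piter delta pc n z)) alpha)).

(* Main.v *)
Require Import Defs.
From Stdlib Require Import Reals.
From Stdlib Require Import Lra Lia ClassicalEpsilon List.
From Coquelicot Require Import Coquelicot.
Import Defs.
Open Scope R_scope.

Lemma Dpow_pos D n : 2 <= D -> 0 < D ^ n.
Proof. intros; apply pow_lt; lra. Qed.

Lemma inv_step D m : 2 <= D -> / D ^ S m <= / D ^ m - / D ^ S m.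
Proof.
  intros HD. pose proof (Dpow_pos D m HD). simpl.
  assert (/ (D * D ^ m) = / D * / D^m) by (field; split; lra).
  rewrite H0. assert (0 < / D^m) by (apply Rinv_0_lt_compat; lra).
  assert (/ D <= /2) by (apply Rinv_le_contravar; lra). nra.
Qed.

Lemma tele (a : nat -> R) D c : 2 <= D -> 0 <= c ->
  (forall n, Rabs (a (S n) - a n) <= c / D^(S n)) ->
  forall n k, Rabs (a (n+k)%nat - a n) <= c * (/ D^n - / D^(n+k)).
Proof.
  intros HD Hc Ha n k. induction k.
  - rewrite Nat.add_0_r. unfold Rminus. rewrite !Rplus_opp_r, Rabs_R0. lra.
  - replace (n + S k)%nat with (S (n+k)) by lia.
    replace (a (S (n+k)) - a n) with ((a (S (n+k)) - a (n+k)%nat) + (a (n+k)%nat - a n)) by ring.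
    eapply Rle_trans; [apply Rabs_triang|].
    pose proof (Ha (n+k)%nat). pose proof (inv_step D (n+k) HD).
    unfold Rdiv in H. nra.
Qed.

Lemma small_pow D c eps : 2 <= D -> 0 < eps -> exists N, forall n, (N <= n)%nat -> Rabs c / D^n < eps.
Proof.
  intros HD He.
  assert (Rabs (/D) < 1).
  { rewrite Rabs_right. 2: { left; apply Rinv_0_lt_compat; lra. }
    rewrite <- Rinv_1. apply Rinv_lt_contravar; lra. }
  destruct (pow_lt_1_zero (/D) H (eps / (Rabs c + 1))) as [N HN].
  { apply Rdiv_lt_0_compat; auto. pose proof (Rabs_pos c); lra. }
  exists N. intros n Hn. specialize (HN n Hn).
  rewrite pow_inv in HN. pose proof (Dpow_pos D n HD).
  rewrite Rabs_right in HN. 2: { left; apply Rinv_0_lt_compat; lra. }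
  pose proof (Rabs_pos c).
  unfold Rdiv. apply Rmult_lt_reg_r with (/ (Rabs c + 1)). apply Rinv_0_lt_compat; lra.
  apply Rle_lt_trans with (/ D ^ n). 2: exact HN.
  assert (0 < / D^n) by (apply Rinv_0_lt_compat; lra).
  assert (Rabs c * / (Rabs c + 1) <= 1).
  { apply Rmult_le_reg_r with (Rabs c + 1). lra. rewrite Rmult_assoc, Rinv_l; lra. }
  nra.
Qed.

Lemma cauchy_geo (a : nat -> R) (D c : R) : 2 <= D -> 0 <= c ->
  (forall n, Rabs (a (S n) - a n) <= c / D^(S n)) ->
  exists l, Un_cv a l /\ forall n, Rabs (l - a n) <= c / D^n.
Proof.
  intros HD Hc Ha. pose proof (tele a D c HD Hc Ha) as T.
  assert (Hb : forall n m, (n <= m)%nat -> Rabs (a m - a n) <= c / D^n).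
  { intros n m Hnm. replace m with (n + (m-n))%nat by lia. eapply Rle_trans. apply T.
    pose proof (Dpow_pos D (n + (m-n)) HD). assert (0 < / D^(n + (m-n))) by (apply Rinv_0_lt_compat; lra).
    unfold Rdiv. nra. }
  assert (Hcc : Cauchy_crit a).
  { intros eps He. destruct (small_pow D c (eps/2) HD) as [N HN]. lra.
    exists N. intros n m Hn Hm. unfold Rdist.
    specialize (HN N (le_n N)). rewrite Rabs_right in HN by lra.
    pose proof (Hb N n Hn). pose proof (Hb N m Hm).
    replace (a n - a m) with ((a n - a N) - (a m - a N)) by ring.
    eapply Rle_lt_trans. apply Rabs_triang. rewrite Rabs_Ropp. lra. }
  destruct (Rcomplete.R_complete a Hcc) as [l Hl]. exists l. split; auto.
  intros n. apply le_epsilon. intros e He.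
  destruct (Hl e He) as [M HM]. specialize (HM (Nat.max n M) ltac:(lia)).
  unfold Rdist in HM. pose proof (Hb n (Nat.max n M) ltac:(lia)).
  replace (l - a n) with (-(a (Nat.max n M) - l) + (a (Nat.max n M) - a n)) by ring.
  eapply Rle_trans. apply Rabs_triang. rewrite Rabs_Ropp. lra.
Qed.

Lemma seq_lim_cv u l : Un_cv u l -> seq_lim u = l.
Proof.
  intros H. unfold seq_lim. destruct excluded_middle_informative as [e|e].
  - destruct (constructive_indefinite_description _ e) as [l' Hl']. simpl.
    eapply UL_sequence; eauto.
  - exfalso. apply e. eauto.
Qed.

Lemma sin_le_id y : 0 <= y <= 1 -> y - y^3/6 <= sin y <= y.
Proof.
  intros Hy. pose proof PI2_1.
  destruct (sin_bound y 0 ltac:(lra) ltac:(lra)) as [H1 H2].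
  unfold sin_approx, sin_term in H1, H2. simpl in H1, H2.
  split.
  - eapply Rle_trans; [|exact H1]. right. field.
  - eapply Rle_trans; [exact H2|]. 
    assert (y^5/120 <= y^3/6).
    { assert (y^5 = y^3 * (y*y)) by ring. rewrite H0.
      assert (0 <= y^3) by (apply pow_le; lra). assert (y*y <= 1) by nra. nra. }
    match goal with |- ?L <= _ => replace L with (y - y^3/6 + y^5/120) by (field) end.
    lra.
Qed.

Lemma sin_abs_le y : Rabs y <= 1 -> Rabs (sin y) <= Rabs y.
Proof.
  intros Hy. destruct (Rle_dec 0 y).
  - rewrite (Rabs_right y) in Hy |- * by lra. pose proof (sin_le_id y ltac:(lra)).
    assert (y^3 <= y) by (simpl; nra).
    rewrite Rabs_right; lra.
  - rewrite (Rabs_left y) in Hy |- * by lra. pose proof (sin_le_id (-y) ltac:(lra)).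
    rewrite sin_neg in H. assert ((-y)^3 <= -y) by (simpl; nra).
    rewrite Rabs_left1; lra.
Qed.

Lemma cos_ge y : Rabs y <= 1 -> 1 - y^2/2 <= cos y.
Proof.
  intros Hy. pose proof PI2_1.
  assert (-1 <= y <= 1) by (apply Rabs_le_between in Hy; lra).
  destruct (COS y ltac:(lra) ltac:(lra)) as [H1 _].
  unfold cos_lb, cos_approx, cos_term in H1. simpl in H1.
  eapply Rle_trans; [|exact H1].
  assert (y^6/720 <= y^4/24).
  { assert (y^6 = y^4 * (y*y)) by ring. rewrite H2.
    assert (0 <= y^4) by (replace (y^4) with ((y*y)*(y*y)) by ring; nra). assert (y*y <= 1) by nra. nra. }
  match goal with |- _ <= ?L => replace L with (1 - y^2/2 + y^4/24 - y^6/720) by (field) end.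
  lra.
Qed.

Lemma exp_le_half x : Rabs x <= 1/2 -> Rabs (exp x - 1) <= 2 * Rabs x /\ exp x <= 2.
Proof.
  intros Hx. pose proof (exp_ineq1_le x). pose proof (exp_ineq1_le (-x)).
  rewrite exp_Ropp in H0. pose proof (exp_pos x).
  assert (-1/2 <= x <= 1/2) by (apply Rabs_le_between in Hx; lra).
  assert (Hm : exp x * (1 - x) <= 1).
  { apply Rmult_le_reg_r with (/ exp x). apply Rinv_0_lt_compat; lra.
    rewrite Rmult_comm, <- Rmult_assoc, Rinv_l by lra. lra. }
  destruct (Rle_dec 0 x).
  - rewrite Rabs_right by lra. rewrite (Rabs_right x) by lra. split; nra.
  - rewrite Rabs_left1 by nra. rewrite (Rabs_left x) by lra. split; nra.
Qed.

Lemma Cmod_le_sum (a : Complex.C) : Cmod a <= Rabs (fst a) + Rabs (snd a).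
Proof.
  destruct a as [x y]. unfold Cmod; simpl.
  rewrite <- (sqrt_Rsqr (Rabs x + Rabs y)) by (pose proof (Rabs_pos x); pose proof (Rabs_pos y); lra).
  apply sqrt_le_1_alt. unfold Rsqr.
  assert (x*x = Rabs x * Rabs x) by (rewrite <- Rabs_mult; rewrite Rabs_right; nra).
  assert (y*y = Rabs y * Rabs y) by (rewrite <- Rabs_mult; rewrite Rabs_right; nra).
  pose proof (Rabs_pos x); pose proof (Rabs_pos y). nra.
Qed.

Lemma Cexp_add a b : Cexp (a + b)%C = (Cexp a * Cexp b)%C.
Proof.
  destruct a as [x y], b as [u v]. unfold Cexp; simpl.
  rewrite exp_plus, cos_plus, sin_plus.
  apply injective_projections; simpl; ring.
Qed.

Lemma Cexp_0 : Cexp (RtoC 0) = RtoC 1.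
Proof. unfold Cexp; simpl. rewrite exp_0, cos_0, sin_0. apply injective_projections; simpl; ring. Qed.

Lemma Cmod_Cexp a : Cmod (Cexp a) = exp (fst a).
Proof.
  destruct a as [x y]. unfold Cmod, Cexp; simpl.
  replace (exp x * cos y * (exp x * cos y * 1) + exp x * sin y * (exp x * sin y * 1))
    with (exp x * exp x * (Rsqr (sin y) + Rsqr (cos y))) by (unfold Rsqr; ring).
  rewrite sin2_cos2, Rmult_1_r. apply sqrt_square. left; apply exp_pos.
Qed.

Lemma Cscal_plus r s a : Cscal (r + s) a = (Cscal r a + Cscal s a)%C.
Proof. destruct a; unfold Cscal; apply injective_projections; simpl; ring. Qed.
Lemma Cscal_assoc r s a : Cscal r (Cscal s a) = Cscal (r*s) a.
Proof. destruct a; unfold Cscal; apply injective_projections; simpl; ring. Qed.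
Lemma Cscal_add r a b : Cscal r (a + b)%C = (Cscal r a + Cscal r b)%C.
Proof. destruct a, b; unfold Cscal; apply injective_projections; simpl; ring. Qed.
Lemma Cscal_0 a : Cscal 0 a = RtoC 0.
Proof. destruct a; unfold Cscal; apply injective_projections; simpl; ring. Qed.
Lemma Cmod_Cscal r a : Cmod (Cscal r a) = Rabs r * Cmod a.
Proof.
  destruct a as [x y]; unfold Cmod, Cscal; simpl. rewrite <- sqrt_Rsqr_abs.
  rewrite <- sqrt_mult by (try apply Rle_0_sqr; nra). f_equal. unfold Rsqr. ring.
Qed.

Lemma Cexp_nat k a : Cexp (Cscal (INR k) a) = (Cexp a ^ k)%C.
Proof.
  induction k.
  - simpl. rewrite Cscal_0. apply Cexp_0.
  - rewrite S_INR, Cscal_plus, Cexp_add, IHk. simpl.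
    replace (Cscal 1 a) with a by (destruct a; unfold Cscal; apply injective_projections; simpl; ring).
    apply Cmult_comm.
Qed.

Lemma Cexp_near1 a : Cmod a <= 1/2 -> Cmod (Cexp a - 1)%C <= 10 * Cmod a.
Proof.
  intros Ha. destruct a as [x y].
  pose proof (Rmax_Cmod (x,y)) as Hm. simpl in Hm.
  assert (Hx : Rabs x <= 1/2) by (eapply Rle_trans; [apply Rmax_l|]; eapply Rle_trans; [exact Hm|]; lra).
  assert (Hy : Rabs y <= 1/2) by (eapply Rle_trans; [apply Rmax_r|]; eapply Rle_trans; [exact Hm|]; lra).
  assert (Hs : Rabs x + Rabs y <= 2 * Cmod (x,y)).
  { pose proof (Rmax_l (Rabs x) (Rabs y)); pose proof (Rmax_r (Rabs x) (Rabs y)). lra. }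
  destruct (exp_le_half x Hx) as [E1 E2].
  pose proof (sin_abs_le y ltac:(lra)). pose proof (cos_ge y ltac:(lra)). pose proof (COS_bound y) as [_ Cb].
  pose proof (exp_pos x).
  replace ((Cexp (x,y) - 1)%C) with ((exp x * cos y - 1, exp x * sin y) : Complex.C)
    by (unfold Cexp; apply injective_projections; simpl; ring).
  eapply Rle_trans. apply Cmod_le_sum. simpl.
  replace (exp x * cos y - 1) with ((exp x - 1) + exp x * (cos y - 1)) by ring.
  assert (Rabs (cos y - 1) <= Rabs y) .
  { rewrite Rabs_left1 by lra. assert (y^2 <= Rabs y).
    { rewrite <- (pow2_abs y). pose proof (Rabs_pos y). simpl. nra. } lra. }
  eapply Rle_trans. apply Rplus_le_compat_r. apply Rabs_triang.
  rewrite !Rabs_mult, (Rabs_right (exp x)) by lra.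
  pose proof (Rabs_pos (cos y - 1)). pose proof (Rabs_pos (sin y)).
  assert (exp x * Rabs (cos y - 1) <= 2 * Rabs y) by nra.
  assert (exp x * Rabs (sin y) <= 2 * Rabs y) by nra.
  pose proof (Rmax_l (Rabs x) (Rabs y)); pose proof (Rmax_r (Rabs x) (Rabs y)). lra.
Qed.

Lemma ln_le_xm1 r : 0 < r -> ln r <= r - 1.
Proof.
  intros Hr. destruct (Rle_dec (ln r) (r-1)); auto.
  exfalso. assert (exp (r-1) < exp (ln r)) by (apply exp_increasing; lra).
  rewrite exp_ln in H by lra. pose proof (exp_ineq1_le (r-1)). lra.
Qed.

Lemma ln_ge_1mx r : 0 < r -> 1 - / r <= ln r.
Proof.
  intros Hr. pose proof (ln_le_xm1 (/r) ltac:(apply Rinv_0_lt_compat; lra)).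
  rewrite ln_Rinv in H by lra. lra.
Qed.

Lemma atan_pos_bound t : 0 <= t <= 1 -> 0 <= atan t <= 2 * t.
Proof.
  intros Ht. pose proof PI_4.
  assert (0 <= atan t).
  { destruct (Req_dec t 0). subst; rewrite atan_0; lra. rewrite <- atan_0. left; apply atan_increasing; lra. }
  assert (atan t <= 1).
  { destruct (Req_dec t 1). subst; rewrite atan_1; lra. left. eapply Rlt_le_trans. apply atan_increasing. 2: rewrite atan_1; lra. lra. }
  split; auto.
  pose proof (sin_le_id (atan t) ltac:(lra)) as [S1 _]. rewrite sin_atan in S1.
  assert (1 <= sqrt (1 + t²)) by (apply Rle_trans with (sqrt 1); [rewrite sqrt_1; lra | apply sqrt_le_1_alt; unfold Rsqr; nra]).
  assert (t / sqrt (1 + t²) <= t).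
  { unfold Rdiv. assert (/ sqrt (1+t²) <= / 1) by (apply Rinv_le_contravar; lra). rewrite Rinv_1 in *.
    assert (0 < /sqrt (1+t²)) by (apply Rinv_0_lt_compat; lra). nra. }
  assert (atan t ^ 3 <= atan t) by (simpl; nra).
  lra.
Qed.

Lemma atan_abs_bound t : Rabs t <= 1 -> Rabs (atan t) <= 2 * Rabs t.
Proof.
  intros Ht. destruct (Rle_dec 0 t).
  - rewrite (Rabs_right t) in Ht |- * by lra. pose proof (atan_pos_bound t ltac:(lra)).
    rewrite Rabs_right; lra.
  - rewrite (Rabs_left t) in Ht |- * by lra. pose proof (atan_pos_bound (-t) ltac:(lra)).
    rewrite atan_opp in H. rewrite Rabs_left1; lra.
Qed.

Definition clog (s : Complex.C) : Complex.C := (ln (Cmod s), atan (snd s / fst s)).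

Lemma Cexp_clog s : 0 < fst s -> Cexp (clog s) = s.
Proof.
  destruct s as [x y]. simpl. intros Hx. unfold Cexp, clog, Cmod; simpl.
  replace (x*(x*1)+y*(y*1)) with (x^2+y^2) by ring.
  assert (Hp : 0 < x^2 + y^2) by (simpl; nra).
  rewrite exp_ln by (apply sqrt_lt_R0; auto).
  rewrite cos_atan, sin_atan.
  assert (E : sqrt (1 + (y/x)²) = sqrt (x^2+y^2) / x).
  { replace (1 + (y/x)²) with ((x^2+y^2)/(x*x)) by (unfold Rsqr; field; lra).
    rewrite sqrt_div_alt by nra. rewrite sqrt_square by lra. reflexivity. }
  rewrite E. assert (0 < sqrt (x^2+y^2)) by (apply sqrt_lt_R0; auto).
  set (S := sqrt (x^2+y^2)) in *. clearbody S. apply injective_projections; simpl; field; split; lra.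
Qed.

Lemma abs_btw a b : Rabs a <= b -> -b <= a <= b.
Proof. intros H. pose proof (Rle_abs a). pose proof (Rle_abs (-a)). rewrite Rabs_Ropp in H1. lra. Qed.

Lemma Cmod_sub1 s : Rabs (Cmod s - 1) <= Cmod (s - 1)%C.
Proof.
  assert (Cmod s <= Cmod (s-1)%C + 1).
  { replace s with ((s - 1) + 1)%C at 1 by ring. eapply Rle_trans. apply Cmod_triangle. rewrite Cmod_1. lra. }
  assert (1 <= Cmod s + Cmod (s-1)%C).
  { assert (Cmod (RtoC 1) <= Cmod s + Cmod (s-1)%C).
    { replace (RtoC 1) with (s + - (s - 1))%C at 1 by ring.
      eapply Rle_trans. apply Cmod_triangle. rewrite Cmod_opp. lra. }
    rewrite Cmod_1 in H0. exact H0. }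
  apply Rabs_le; lra.
Qed.

Lemma clog_small s : Cmod (s - 1)%C <= 1/2 -> 0 < fst s /\ Cmod (clog s) <= 6 * Cmod (s - 1)%C.
Proof.
  intros Hs. set (c := Cmod (s-1)%C) in *.
  pose proof (Rmax_Cmod (s-1)%C) as Hm. fold c in Hm.
  destruct s as [x y]. simpl in Hm.
  replace (x + - (1)) with (x - 1) in Hm by ring. replace (y + - (0)) with y in Hm by ring.
  pose proof (Rmax_l (Rabs (x-1)) (Rabs y)); pose proof (Rmax_r (Rabs (x-1)) (Rabs y)).
  assert (Hx: -c <= x - 1 <= c) by (apply abs_btw; lra).
  assert (Hy: Rabs y <= c) by lra.
  pose proof (Cmod_sub1 (x,y)) as Hr. fold c in Hr.
  set (r := Cmod (x,y)) in *.
  assert (Hr' : -c <= r - 1 <= c) by (apply abs_btw; lra).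
  split. simpl; lra.
  eapply Rle_trans. apply Cmod_le_sum. unfold clog; simpl. fold r.
  assert (Rabs (ln r) <= 2 * c).
  { pose proof (ln_le_xm1 r ltac:(lra)). pose proof (ln_ge_1mx r ltac:(lra)).
    assert (/ r <= 2) by (replace 2 with (/ (1/2)) by field; apply Rinv_le_contravar; lra).
    assert ((r-1) * /r >= 2 * (r - 1) \/ 1 <= r).
    { destruct (Rle_dec 1 r). right; lra. left. assert (0 < /r) by (apply Rinv_0_lt_compat; lra). nra. }
    replace (1 - / r) with ((r-1) * /r) in H2 by (field; lra).
    apply Rabs_le. destruct H4; [lra|]. assert (0 < /r) by (apply Rinv_0_lt_compat; lra).
    assert ((r-1) * / r >= 0) by nra. lra. }
  assert (Rabs (y / x) <= 2 * c).
  { unfold Rdiv. rewrite Rabs_mult, Rabs_inv, (Rabs_right x) by lra.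
    assert (/ x <= 2) by (replace 2 with (/ (1/2)) by field; apply Rinv_le_contravar; lra).
    assert (0 < /x) by (apply Rinv_0_lt_compat; lra). pose proof (Rabs_pos y). nra. }
  pose proof (atan_abs_bound (y/x) ltac:(lra)). lra.
Qed.

Ltac Cring := match goal with |- ?a = ?b => change (@eq Complex.C a b); ring end.

Lemma Cnorm_Cmod a : Cnorm a = Cmod a.
Proof. unfold Cnorm, Cmod. f_equal. simpl. ring. Qed.
Lemma Cpow_eq a n : Cpow a n = (a ^ n)%C.
Proof. induction n; simpl; [reflexivity|rewrite IHn; reflexivity]. Qed.
Lemma Cmul_eq a b : Cmul a b = (a * b)%C.
Proof. reflexivity. Qed.
Lemma Cadd_eq a b : Cadd a b = (a + b)%C.
Proof. reflexivity. Qed.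
Lemma Cx0_eq : Cx0 = RtoC 0. Proof. reflexivity. Qed.
Lemma Cx1_eq : Cx1 = RtoC 1. Proof. reflexivity. Qed.

Lemma Csum_S n f : Csum (S n) f = (Csum n f + f (S n))%C.
Proof. reflexivity. Qed.
Lemma Csum_O f : Csum 0 f = f O.
Proof. reflexivity. Qed.

Lemma Csum_ext n f g : (forall k, (k <= n)%nat -> f k = g k) -> Csum n f = Csum n g.
Proof.
  induction n; intros H. rewrite !Csum_O; apply H; lia.
  rewrite !Csum_S, IHn by (intros; apply H; lia). rewrite (H (S n)) by lia. reflexivity.
Qed.

Lemma Csum_plus n f g : Csum n (fun k => f k + g k)%C = (Csum n f + Csum n g)%C.
Proof. induction n. reflexivity. rewrite !Csum_S, IHn. Cring. Qed.
Lemma Csum_minus n f g : Csum n (fun k => f k - g k)%C = (Csum n f - Csum n g)%C.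
Proof. induction n. reflexivity. rewrite !Csum_S, IHn. Cring. Qed.
Lemma Csum_mul_l n c f : Csum n (fun k => c * f k)%C = (c * Csum n f)%C.
Proof. induction n. reflexivity. rewrite !Csum_S, IHn. Cring. Qed.
Lemma Csum_zero n f : (forall k, (k <= n)%nat -> f k = RtoC 0) -> Csum n f = RtoC 0.
Proof.
  induction n; intros H. rewrite Csum_O; apply H; lia.
  rewrite Csum_S, IHn by (intros; apply H; lia). rewrite (H (S n)) by lia. Cring.
Qed.
Lemma Csum_swap N M f : Csum N (fun i => Csum M (fun j => f i j)) = Csum M (fun j => Csum N (fun i => f i j)).
Proof.
  induction N. simpl. reflexivity.
  rewrite Csum_S, IHN. rewrite <- Csum_plus. reflexivity.
Qed.
Lemma Csum_single n j f : (j <= n)%nat -> (forall k, (k <= n)%nat -> k <> j -> f k = RtoC 0) -> Csum n f = f j.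
Proof.
  induction n; intros Hj H.
  - rewrite Csum_O. replace j with O by lia. reflexivity.
  - rewrite Csum_S. destruct (Nat.eq_dec j (S n)).
    + subst. rewrite Csum_zero by (intros; apply H; lia). Cring.
    + rewrite IHn by (try lia; intros; apply H; lia). rewrite (H (S n)) by lia. Cring.
Qed.
Lemma Csum_norm n f : Cmod (Csum n f) <= sum_f_R0 (fun k => Cmod (f k)) n.
Proof.
  induction n. simpl. lra.
  rewrite Csum_S. simpl. eapply Rle_trans. apply Cmod_triangle. lra.
Qed.

Lemma sum_nonneg (a : nat -> R) n : (forall k, (k <= n)%nat -> 0 <= a k) -> 0 <= sum_f_R0 a n.
Proof. intros H. induction n. simpl; apply H; lia. simpl. pose proof (H (S n) ltac:(lia)). pose proof (IHn ltac:(intros; apply H; lia)). lra. Qed.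
Lemma sum_ge_term (a : nat -> R) n j : (forall k, (k <= n)%nat -> 0 <= a k) -> (j <= n)%nat -> a j <= sum_f_R0 a n.
Proof.
  intros H Hj. induction n. simpl. replace j with O by lia. lra.
  simpl. destruct (Nat.eq_dec j (S n)). subst. pose proof (sum_nonneg a n ltac:(intros; apply H; lia)). lra.
  pose proof (IHn ltac:(intros; apply H; lia) ltac:(lia)). pose proof (H (S n) ltac:(lia)). lra.
Qed.
Lemma sum_mul_r (a : nat -> R) n c : sum_f_R0 (fun k => a k * c) n = sum_f_R0 a n * c.
Proof. induction n; simpl; [ring| rewrite IHn; ring]. Qed.
Lemma sum_le_mono (a b : nat -> R) n : (forall k, (k <= n)%nat -> a k <= b k) -> sum_f_R0 a n <= sum_f_R0 b n.
Proof. apply sum_Rle. Qed.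
Lemma sum_le_S (a : nat -> R) n : 0 <= a (S n) -> sum_f_R0 a n <= sum_f_R0 a (S n).
Proof. simpl. lra. Qed.

Definition Mx (u : Complex.C) := 1 + Cmod u.
Definition Fp (d : nat) (hc : nat -> Cx) (u : Complex.C) : Cx := Csum d (fun m => Cmul (hc m) (Cpow u m)).
Definition Asum (d : nat) (hc : nat -> Cx) := sum_f_R0 (fun m => Cmod (hc m)) d.

Lemma Mx_ge1 u : 1 <= Mx u.
Proof. unfold Mx; pose proof (Cmod_ge_0 u); lra. Qed.

Lemma Asum_nonneg d hc : 0 <= Asum d hc.
Proof. apply sum_nonneg; intros; apply Cmod_ge_0. Qed.

Lemma pow_mono_exp x m n : 1 <= x -> (m <= n)%nat -> x ^ m <= x ^ n.
Proof. intros; apply Rle_pow; auto. Qed.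

Lemma poly_bound d hc u : Cmod (Fp d hc u) <= Asum d hc * Mx u ^ d.
Proof.
  unfold Fp, Asum. eapply Rle_trans. apply Csum_norm. rewrite <- sum_mul_r.
  apply sum_le_mono. intros k Hk. rewrite Cmul_eq, Cpow_eq, Cmod_mult, Cmod_pow.
  apply Rmult_le_compat_l. apply Cmod_ge_0.
  apply Rle_trans with (Mx u ^ k). apply pow_incr. split. apply Cmod_ge_0. unfold Mx; pose proof (Cmod_ge_0 u); lra.
  apply pow_mono_exp; auto. apply Mx_ge1.
Qed.

Lemma Cmod_rev_tri (a b : Complex.C) : Cmod b - Cmod a <= Cmod (a + b)%C.
Proof.
  assert (Cmod b <= Cmod (a+b)%C + Cmod a).
  { replace b with ((a + b) + - a)%C at 1 by ring. eapply Rle_trans. apply Cmod_triangle. rewrite Cmod_opp. lra. }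
  lra.
Qed.

Lemma poly_lower d hc u : (1 <= d)%nat -> hc d = Cx1 -> 1 <= Cmod u -> 2 * Asum d hc <= Cmod u ->
  Cmod u ^ d / 2 <= Cmod (Fp d hc u).
Proof.
  intros Hd Hl H1 H2. destruct d as [|d']. lia.
  unfold Fp. rewrite Csum_S, Hl, Cmul_eq, Cx1_eq, Cmult_1_l, Cpow_eq.
  set (A := Asum (S d') hc) in *.
  assert (Cmod (Csum d' (fun m => Cmul (hc m) (Cpow u m))) <= A * Cmod u ^ d').
  { eapply Rle_trans. apply Csum_norm.
    apply Rle_trans with (sum_f_R0 (fun m => Cmod (hc m)) d' * Cmod u ^ d').
    rewrite <- sum_mul_r. apply sum_le_mono. intros k Hk. rewrite Cmul_eq, Cpow_eq, Cmod_mult, Cmod_pow.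
    apply Rmult_le_compat_l. apply Cmod_ge_0. apply pow_mono_exp; auto.
    apply Rmult_le_compat_r. apply pow_le; lra. unfold A, Asum. apply sum_le_S. apply Cmod_ge_0. }
  pose proof (Cmod_rev_tri (Csum d' (fun m => Cmul (hc m) (Cpow u m))) (u ^ S d')%C).
  rewrite Cmod_pow in H0. simpl pow in *.
  assert (0 <= Cmod u ^ d') by (apply pow_le; lra).
  pose proof (Asum_nonneg (S d') hc). fold A in H4.
  nra.
Qed.

Lemma powdiff (u v : Complex.C) T m : Cmod u <= T -> Cmod v <= T ->
  Cmod (u ^ S m - v ^ S m)%C <= INR (S m) * Cmod (u - v)%C * T ^ m.
Proof.
  intros Hu Hv. assert (0 <= T) by (pose proof (Cmod_ge_0 u); lra).
  induction m.
  - simpl. replace (u * 1 - v * 1)%C with (u - v)%C by ring. lra.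
  - replace (u ^ S (S m) - v ^ S (S m))%C with (u * (u ^ S m - v ^ S m) + (u - v) * v ^ S m)%C by (simpl; ring).
    eapply Rle_trans. apply Cmod_triangle. rewrite !Cmod_mult, Cmod_pow.
    assert (Cmod v ^ S m <= T ^ S m) by (apply pow_incr; split; auto; apply Cmod_ge_0).
    pose proof (Cmod_ge_0 (u - v)%C). pose proof (Cmod_ge_0 u).
    pose proof (Cmod_ge_0 (u ^ S m - v ^ S m)%C).
    rewrite S_INR. simpl pow in *.
    assert (Cmod u * Cmod (u ^ S m - v ^ S m)%C <= T * (INR (S m) * Cmod (u - v)%C * T ^ m)).
    { apply Rmult_le_compat; auto. }
    nra.
Qed.

Lemma Fp_minus d hc u v : (Fp d hc u - Fp d hc v)%C = Csum d (fun m => hc m * (u ^ m - v ^ m))%C.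
Proof.
  unfold Fp. change (Cx) with (Complex.C). rewrite <- Csum_minus. apply Csum_ext. intros k _.
  cbv beta. change Cmul with Cmult. change Cpow with Complex.Cpow. Cring.
Qed.

Lemma poly_lip d hc u v e : 0 <= e <= 1 -> Cmod (u - v)%C <= e * Mx v ->
  Cmod (Fp d hc u - Fp d hc v)%C <= Asum d hc * (INR d * 2^d * e * Mx v ^ d).
Proof.
  intros He Huv. rewrite Fp_minus. eapply Rle_trans. apply Csum_norm.
  unfold Asum. rewrite <- sum_mul_r. apply sum_le_mono. intros m Hm.
  rewrite Cmod_mult. apply Rmult_le_compat_l. apply Cmod_ge_0.
  pose proof (Mx_ge1 v) as HM. pose proof (pos_INR d).
  assert (0 <= INR d * 2 ^ d * e * Mx v ^ d).
  { apply Rmult_le_pos. apply Rmult_le_pos. apply Rmult_le_pos. lra. apply pow_le; lra. lra. apply pow_le; lra. }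
  destruct m as [|m'].
  - simpl. replace (1 - 1)%C with (RtoC 0) by ring. rewrite Cmod_0. lra.
  - assert (Hu : Cmod u <= 2 * Mx v).
    { assert (Cmod u <= Cmod (u - v)%C + Cmod v).
      { replace u with ((u - v) + v)%C at 1 by ring. apply Cmod_triangle. }
      unfold Mx in *. pose proof (Cmod_ge_0 v). nra. }
    assert (Hv : Cmod v <= 2 * Mx v) by (unfold Mx in *; pose proof (Cmod_ge_0 v); lra).
    eapply Rle_trans. apply (powdiff u v (2 * Mx v) m' Hu Hv).
    assert (INR (S m') <= INR d) by (apply le_INR; lia).
    assert (Mx v * (2 * Mx v) ^ m' <= (2 * Mx v) ^ d).
    { apply Rle_trans with ((2 * Mx v) ^ S m'). simpl. assert (0 <= (2 * Mx v)^m') by (apply pow_le; lra). nra.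
      apply pow_mono_exp; [lra|lia]. }
    pose proof (Cmod_ge_0 (u - v)%C). pose proof (pos_INR (S m')).
    assert (0 <= (2 * Mx v) ^ m') by (apply pow_le; lra).
    apply Rle_trans with (INR (S m') * (e * Mx v) * (2 * Mx v) ^ m').
    { apply Rmult_le_compat_r; auto. apply Rmult_le_compat_l; auto. }
    replace (INR (S m') * (e * Mx v) * (2 * Mx v) ^ m') with (INR (S m') * e * (Mx v * (2 * Mx v) ^ m')) by ring.
    replace (INR d * 2 ^ d * e * Mx v ^ d) with (INR d * e * (2 * Mx v) ^ d) by (rewrite Rpow_mult_distr; ring).
    assert (0 <= Mx v * (2 * Mx v) ^ m') by (apply Rmult_le_pos; lra).
    apply Rmult_le_compat; try lra. apply Rmult_le_pos; lra. apply Rmult_le_compat_r; lra.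
Qed.

Lemma ln_le_0 x : x <= 1 -> ln x <= 0.
Proof.
  intros H. destruct (Rlt_dec 0 x). pose proof (ln_le_xm1 x r). lra.
  unfold ln. destruct (Rlt_dec 0 x). contradiction. lra.
Qed.
Lemma ln_ge_0 x : 1 <= x -> 0 <= ln x.
Proof. intros H. pose proof (ln_ge_1mx x ltac:(lra)). assert (/x <= 1) by (rewrite <- Rinv_1; apply Rinv_le_contravar; lra). lra. Qed.
Lemma ln_mono x y : 0 < x -> x <= y -> ln x <= ln y.
Proof. intros. destruct (Req_dec x y). subst; lra. left; apply ln_increasing; lra. Qed.
Lemma lp_nonneg x : 0 <= logplus x.
Proof. unfold logplus. apply Rmax_l. Qed.
Lemma lp_ge_ln x : ln x <= logplus x.
Proof. unfold logplus. apply Rmax_r. Qed.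
Lemma lp_small x : x <= 1 -> logplus x = 0.
Proof. intros. unfold logplus. pose proof (ln_le_0 x H). apply Rmax_left. lra. Qed.
Lemma lp_big x : 1 <= x -> logplus x = ln x.
Proof. intros. unfold logplus. pose proof (ln_ge_0 x H). apply Rmax_right. lra. Qed.
Lemma lp_le x y : 1 <= y -> x <= y -> logplus x <= ln y.
Proof.
  intros. destruct (Rle_dec x 1). rewrite lp_small by auto. apply ln_ge_0; auto.
  rewrite lp_big by lra. apply ln_mono; lra.
Qed.

Lemma one_le_mul a b : 1 <= a -> 1 <= b -> 1 <= a * b.
Proof. intros; nra. Qed.

Lemma pow_ge_sq x d : 1 <= x -> (2 <= d)%nat -> x ^ 2 <= x ^ d.
Proof. intros; apply Rle_pow; auto. Qed.

Section GreenA.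
Variable H : Complex.C -> Complex.C.
Variables (d : nat) (A R0 K : R).
Hypothesis Hd : (2 <= d)%nat.
Hypothesis HR0 : 2 <= R0.
Hypothesis HA : 0 <= A.
Hypothesis HK : 0 <= K.
Hypothesis Hbnd : forall u, Cmod (H u) <= A * Mx u ^ d.
Hypothesis Hlow : forall u, R0 <= Cmod u -> Cmod u ^ d / 2 <= Cmod (H u).
Hypothesis Hlip : forall u v e, 0 <= e <= 1 -> Cmod (u - v)%C <= e * Mx v ->
   Cmod (H u - H v)%C <= K * e * Mx v ^ d.

Definition lp (u : Complex.C) := logplus (Cmod u).
Definition DD := INR d.
Definition C1 := ln 4 + ln ((A+1) * 2^d) + ln ((A+1) * (1+R0)^d) + DD * ln R0.

Lemma DD_ge2 : 2 <= DD.
Proof. unfold DD. apply le_INR in Hd. simpl in Hd. lra. Qed.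

Lemma pow2_ge1 : 1 <= 2 ^ d.
Proof. apply pow_R1_Rle. lra. Qed.

Lemma C1_nonneg : 0 <= C1.
Proof.
  unfold C1. pose proof DD_ge2. pose proof pow2_ge1.
  assert (1 <= (1+R0)^d) by (apply pow_R1_Rle; lra).
  pose proof (ln_ge_0 4 ltac:(lra)). pose proof (ln_ge_0 ((A+1)*2^d) (one_le_mul (A+1) (2^d) ltac:(lra) ltac:(lra))).
  pose proof (ln_ge_0 ((A+1)*(1+R0)^d) (one_le_mul (A+1) ((1+R0)^d) ltac:(lra) ltac:(lra))). pose proof (ln_ge_0 R0 ltac:(lra)). nra.
Qed.

Lemma step_bound u u' eta : 0 <= eta -> eta * 2^d <= 1/4 ->
  Cmod (u' - H u)%C <= eta * Mx u ^ d -> Rabs (lp u' - DD * lp u) <= C1.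
Proof.
  intros He1 He2 Hs. unfold lp.
  pose proof DD_ge2. pose proof pow2_ge1.
  assert (HP1 : 1 <= (1+R0)^d) by (apply pow_R1_Rle; lra).
  pose proof (ln_ge_0 4 ltac:(lra)). pose proof (ln_ge_0 ((A+1)*2^d) (one_le_mul (A+1) (2^d) ltac:(lra) ltac:(lra))).
  pose proof (ln_ge_0 ((A+1)*(1+R0)^d) (one_le_mul (A+1) ((1+R0)^d) ltac:(lra) ltac:(lra))). pose proof (ln_ge_0 R0 ltac:(lra)).
  assert (Hu'1 : Cmod u' <= Cmod (H u) + eta * Mx u ^ d).
  { replace u' with ((u' - H u) + H u)%C at 1 by ring. eapply Rle_trans. apply Cmod_triangle.
    lra. }
  assert (Hu'2 : Cmod (H u) - eta * Mx u ^ d <= Cmod u').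
  { pose proof (Cmod_rev_tri (u' - H u)%C (H u)). replace (u' - H u + H u)%C with u' in H6 by ring.
    lra. }
  pose proof (Hbnd u). pose proof (Mx_ge1 u).
  assert (0 <= Mx u ^ d) by (apply pow_le; lra).
  assert (eta <= 1) by (assert (eta <= eta * 2^d) by nra; lra).
  destruct (Rle_dec R0 (Cmod u)) as [Hb|Hb].
  - pose proof (Hlow u Hb).
    assert (HMx : Mx u ^ d <= 2^d * Cmod u ^ d).
    { rewrite <- Rpow_mult_distr. apply pow_incr. unfold Mx; split; lra. }
    set (X := Cmod u ^ d) in *.
    assert (HX : 4 <= X).
    { unfold X. eapply Rle_trans. 2: apply pow_ge_sq; auto; lra. simpl. nra. }
    assert (L1 : X / 4 <= Cmod u') by nra.
    assert (L2 : Cmod u' <= ((A+1) * 2^d) * X) by nra.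
    rewrite lp_big by lra. rewrite (lp_big (Cmod u)) by lra.
    assert (DD * ln (Cmod u) = ln X) by (unfold X, DD; rewrite ln_pow; lra).
    assert (ln (X/4) <= ln (Cmod u')) by (apply ln_mono; lra).
    unfold Rdiv in H12. rewrite ln_mult, ln_Rinv in H12 by lra.
    assert (ln (Cmod u') <= ln ((A+1)*2^d*X)) by (apply ln_mono; lra).
    rewrite ln_mult in H13 by nra.
    assert (0 <= DD * ln R0) by nra. apply Rabs_le. unfold C1. lra.
  - apply Rnot_le_lt in Hb. pose proof (Cmod_ge_0 u). assert (Hs2 : Mx u ^ d <= (1 + R0)^d) by (apply pow_incr; unfold Mx; split; lra).
    assert (Cmod u' <= (A+1) * (1+R0)^d) by nra.
    pose proof (lp_le (Cmod u') ((A+1)*(1+R0)^d) (one_le_mul (A+1) ((1+R0)^d) ltac:(lra) ltac:(lra)) H11).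
    pose proof (lp_le (Cmod u) R0 ltac:(lra) ltac:(lra)).
    pose proof (lp_nonneg (Cmod u')). pose proof (lp_nonneg (Cmod u)).
    apply Rabs_le. unfold C1. nra.
Qed.

Definition aseq (u : nat -> Complex.C) (n : nat) := / DD ^ n * lp (u n).

Lemma conv_seq u eta : 0 <= eta -> eta * 2^d <= 1/4 ->
  (forall n, Cmod (u (S n) - H (u n))%C <= eta * Mx (u n) ^ d) ->
  exists l, Un_cv (aseq u) l /\ forall n, Rabs (l - aseq u n) <= C1 / DD ^ n.
Proof.
  intros He1 He2 Hs. apply cauchy_geo. apply DD_ge2. apply C1_nonneg.
  intros n. unfold aseq.
  pose proof DD_ge2. pose proof (Dpow_pos DD n H0).
  replace (/ DD ^ S n * lp (u (S n)) - / DD ^ n * lp (u n)) with (/ DD ^ S n * (lp (u (S n)) - DD * lp (u n)))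
    by (simpl; field; lra).
  rewrite Rabs_mult, Rabs_right. 2: { left; apply Rinv_0_lt_compat; apply Dpow_pos; lra. }
  unfold Rdiv. rewrite Rmult_comm. apply Rmult_le_compat_r. left; apply Rinv_0_lt_compat; apply Dpow_pos; lra.
  eapply step_bound; eauto.
Qed.

Definition Kp := 2^(S d) + (1+R0)^d.
Definition K2 := (2^d + K) * Kp.

Lemma K2_ge1 : 1 <= K2.
Proof.
  unfold K2, Kp. pose proof pow2_ge1. assert (1 <= 2^(S d)) by (apply pow_R1_Rle; lra).
  assert (1 <= (1+R0)^d) by (apply pow_R1_Rle; lra). nra.
Qed.

Lemma Mx_pow_Kp v : Mx v ^ d <= Kp * Mx (H v).
Proof.
  pose proof (Mx_ge1 (H v)). pose proof (Cmod_ge_0 v). unfold Kp.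
  assert (0 <= 2^(S d)) by (apply pow_le; lra). assert (0 <= (1+R0)^d) by (apply pow_le; lra).
  destruct (Rle_dec R0 (Cmod v)).
  - pose proof (Hlow v r).
    assert (Mx v ^ d <= 2^d * Cmod v ^ d).
    { rewrite <- Rpow_mult_distr. apply pow_incr. unfold Mx; split; lra. }
    simpl pow. pose proof (Cmod_ge_0 (H v)). pose proof pow2_ge1.
    assert (2^d * (Cmod v ^ d / 2) <= 2^d * Cmod (H v)) by (apply Rmult_le_compat_l; lra).
    assert (2 * 2^d * Cmod (H v) <= (2 * 2^d + (1+R0)^d) * Mx (H v)) by (unfold Mx; nra).
    lra.
  - assert (Mx v ^ d <= (1+R0)^d) by (apply pow_incr; unfold Mx; split; lra).
    nra.
Qed.

Lemma compare_orbits u v eta n0 : 0 <= eta -> eta * INR n0 * K2 ^ n0 <= 1 ->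
  (forall n, Cmod (u (S n) - H (u n))%C <= eta * Mx (u n) ^ d) ->
  (forall n, v (S n) = H (v n)) -> u O = v O ->
  forall k, (k <= n0)%nat -> Cmod (u k - v k)%C <= eta * INR k * K2 ^ k * Mx (v k).
Proof.
  intros He Hn Hu Hv H0 k. pose proof K2_ge1.
  induction k; intros Hk.
  - rewrite H0. replace (v O - v O)%C with (RtoC 0) by ring. rewrite Cmod_0. simpl. pose proof (Mx_ge1 (v O)). nra.
  - specialize (IHk ltac:(lia)). set (e := eta * INR k * K2 ^ k) in *.
    assert (Hkk : K2 ^ k <= K2 ^ n0) by (apply Rle_pow; auto; lia).
    assert (HK2k : 1 <= K2 ^ k) by (apply pow_R1_Rle; lra).
    assert (He0 : 0 <= e) by (unfold e; pose proof (pos_INR k); apply Rmult_le_pos; [apply Rmult_le_pos|]; lra).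
    assert (He1 : e <= 1).
    { unfold e. apply Rle_trans with (eta * INR n0 * K2 ^ n0); auto.
      assert (INR k <= INR n0) by (apply le_INR; lia). pose proof (pos_INR k).
      apply Rmult_le_compat; [apply Rmult_le_pos; lra | lra | apply Rmult_le_compat_l; lra | lra]. }
    rewrite Hv.
    pose proof (Hlip (u k) (v k) e ltac:(lra) IHk).
    specialize (Hu k).
    assert (HMu : Mx (u k) ^ d <= 2^d * Mx (v k) ^ d).
    { rewrite <- Rpow_mult_distr. apply pow_incr. split. pose proof (Mx_ge1 (u k)); lra.
      assert (Cmod (u k) <= Cmod (u k - v k)%C + Cmod (v k)).
      { replace (u k) with ((u k - v k) + v k)%C at 1 by ring. apply Cmod_triangle. }
      unfold Mx in *. pose proof (Cmod_ge_0 (v k)). nra. }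
    assert (Cmod (u (S k) - H (v k))%C <= (2^d + K) * (eta + e) * Mx (v k) ^ d).
    { replace (u (S k) - H (v k))%C with ((u (S k) - H (u k)) + (H (u k) - H (v k)))%C by ring.
      eapply Rle_trans. apply Cmod_triangle.
      pose proof pow2_ge1. assert (0 <= Mx (v k) ^ d) by (apply pow_le; pose proof (Mx_ge1 (v k)); lra).
      assert (eta * Mx (u k) ^ d <= eta * (2^d * Mx (v k) ^ d)) by (apply Rmult_le_compat_l; lra).
      assert (0 <= 2^d * e * Mx (v k) ^ d) by (apply Rmult_le_pos; [apply Rmult_le_pos|]; lra).
      assert (0 <= K * eta * Mx (v k) ^ d) by (apply Rmult_le_pos; [apply Rmult_le_pos|]; lra).
      nra. }
    pose proof (Mx_pow_Kp (v k)).
    assert (0 <= (2^d + K) * (eta + e)) by (pose proof pow2_ge1; apply Rmult_le_pos; lra).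
    eapply Rle_trans. exact H3.
    apply Rle_trans with ((2^d + K) * (eta + e) * (Kp * Mx (H (v k)))).
    apply Rmult_le_compat_l; auto.
    replace ((2^d + K) * (eta + e) * (Kp * Mx (H (v k)))) with (K2 * (eta + e) * Mx (H (v k))) by (unfold K2; ring).
    apply Rmult_le_compat_r. pose proof (Mx_ge1 (H (v k))); lra.
    unfold e. rewrite S_INR. simpl pow.
    assert (K2 <= K2 * K2 ^ k) by nra.
    assert (eta * K2 <= eta * (K2 * K2 ^ k)) by (apply Rmult_le_compat_l; lra).
    nra.
Qed.

Lemma lp_compare u v e : 0 <= e <= 1/4 -> Cmod (u - v)%C <= e * Mx v -> Rabs (lp u - lp v) <= 4 * e.
Proof.
  intros He Huv. unfold lp. pose proof (Cmod_ge_0 v). pose proof (Cmod_ge_0 u).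
  assert (Hu1 : Cmod u <= Cmod (u - v)%C + Cmod v).
  { replace u with ((u - v) + v)%C at 1 by ring. apply Cmod_triangle. }
  assert (Hu2 : Cmod v - Cmod (u - v)%C <= Cmod u).
  { pose proof (Cmod_rev_tri (u - v)%C (- (u - v) + u)%C). replace (u - v + (- (u - v) + u))%C with u in H2 by ring.
    replace (- (u - v) + u)%C with v in H2 by ring. lra. }
  unfold Mx in Huv. pose proof (lp_nonneg (Cmod u)).
  destruct (Rle_dec 1 (Cmod v)).
  - rewrite (lp_big (Cmod v)) by lra.
    assert (Cmod u <= (1 + 2*e) * Cmod v) by nra.
    assert ((1 - 2*e) * Cmod v <= Cmod u) by nra.
    assert (logplus (Cmod u) <= ln (1 + 2*e) + ln (Cmod v)).
    { rewrite <- ln_mult by lra. apply lp_le. nra. lra. }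
    pose proof (ln_le_xm1 (1 + 2*e) ltac:(lra)).
    assert (ln ((1 - 2*e) * Cmod v) <= logplus (Cmod u)).
    { eapply Rle_trans. 2: apply lp_ge_ln. apply ln_mono. nra. lra. }
    rewrite ln_mult in H7 by lra.
    pose proof (ln_ge_1mx (1 - 2*e) ltac:(lra)).
    assert (1 - / (1 - 2*e) >= - 4 * e).
    { assert (/ (1 - 2*e) <= 1 + 4 * e).
      { apply Rmult_le_reg_l with (1 - 2*e). lra. rewrite Rinv_r by lra. nra. }
      lra. }
    apply Rabs_le. lra.
  - apply Rnot_le_lt in n. rewrite (lp_small (Cmod v)) by lra.
    assert (Cmod u <= 1 + 2 * e) by nra.
    pose proof (lp_le (Cmod u) (1 + 2*e) ltac:(lra) H3).
    pose proof (ln_le_xm1 (1 + 2*e) ltac:(lra)).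
    apply Rabs_le. lra.
Qed.

Lemma green_compare : forall eps, 0 < eps -> exists eta, 0 < eta /\
  forall u v : nat -> Complex.C,
    (forall n, Cmod (u (S n) - H (u n))%C <= eta * Mx (u n) ^ d) ->
    (forall n, v (S n) = H (v n)) -> u O = v O ->
    exists lu lv, Un_cv (aseq u) lu /\ Un_cv (aseq v) lv /\ Rabs (lu - lv) < eps.
Proof.
  intros eps Heps. pose proof DD_ge2. pose proof C1_nonneg. pose proof K2_ge1. pose proof pow2_ge1.
  destruct (small_pow DD C1 (eps/4) H0 ltac:(lra)) as [n0 Hn0].
  specialize (Hn0 n0 (le_n n0)). rewrite Rabs_right in Hn0 by lra.
  pose proof (Dpow_pos DD n0 H0) as HD.
  assert (HKn : 1 <= K2 ^ n0) by (apply pow_R1_Rle; lra).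
  set (B := (INR n0 + 1) * K2 ^ n0).
  assert (HB : 1 <= B) by (unfold B; pose proof (pos_INR n0); nra).
  set (eta := Rmin (/ (4 * 2^d)) (Rmin (/ (4 * B)) (eps * DD ^ n0 / (16 * B)))).
  assert (He0 : 0 < eta).
  { unfold eta. apply Rmin_pos. apply Rinv_0_lt_compat; lra. apply Rmin_pos. apply Rinv_0_lt_compat; lra.
    apply Rdiv_lt_0_compat; nra. }
  exists eta. split; auto. intros u v Hu Hv H0v.
  assert (Heta1 : eta * 2^d <= 1/4).
  { assert (eta <= / (4 * 2^d)) by apply Rmin_l.
    apply Rle_trans with (/ (4 * 2^d) * 2^d). apply Rmult_le_compat_r; lra. right; field; lra. }
  assert (Heta2 : eta * B <= 1/4).
  { assert (eta <= / (4 * B)) by (eapply Rle_trans; [apply Rmin_r|apply Rmin_l]).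
    apply Rle_trans with (/ (4 * B) * B). apply Rmult_le_compat_r; lra. right; field; lra. }
  assert (Heta3 : eta * B <= eps * DD ^ n0 / 16).
  { assert (eta <= eps * DD ^ n0 / (16 * B)) by (eapply Rle_trans; [apply Rmin_r|apply Rmin_r]).
    apply Rle_trans with (eps * DD ^ n0 / (16 * B) * B). apply Rmult_le_compat_r; lra. right; field; lra. }
  destruct (conv_seq u eta ltac:(lra) Heta1 Hu) as [lu [Hlu Blu]].
  destruct (conv_seq v 0 ltac:(lra) ltac:(lra)) as [lv [Hlv Blv]].
  { intros n. rewrite Hv. replace (H (v n) - H (v n))%C with (RtoC 0) by ring. rewrite Cmod_0.
    pose proof (Mx_ge1 (v n)). assert (0 <= Mx (v n) ^ d) by (apply pow_le; lra). lra. }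
  exists lu, lv. split; auto. split; auto.
  assert (HeB : eta * INR n0 * K2 ^ n0 <= eta * B).
  { unfold B. assert (0 <= eta) by lra. nra. }
  pose proof (compare_orbits u v eta n0 ltac:(lra) ltac:(lra) Hu Hv H0v n0 (le_n n0)) as Hc.
  assert (He : 0 <= eta * INR n0 * K2 ^ n0 <= 1/4) by (split; [pose proof (pos_INR n0); apply Rmult_le_pos; [apply Rmult_le_pos|]; lra|lra]).
  pose proof (lp_compare (u n0) (v n0) _ He Hc).
  specialize (Blu n0). specialize (Blv n0).
  assert (Rabs (aseq u n0 - aseq v n0) <= eps / 4).
  { unfold aseq. replace (/ DD ^ n0 * lp (u n0) - / DD ^ n0 * lp (v n0)) with (/ DD ^ n0 * (lp (u n0) - lp (v n0))) by ring.
    rewrite Rabs_mult, Rabs_right by (left; apply Rinv_0_lt_compat; lra).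
    apply Rle_trans with (/ DD ^ n0 * (4 * (eta * B))).
    apply Rmult_le_compat_l. left; apply Rinv_0_lt_compat; lra. lra.
    apply Rle_trans with (/ DD ^ n0 * (4 * (eps * DD ^ n0 / 16))).
    apply Rmult_le_compat_l. left; apply Rinv_0_lt_compat; lra. lra.
    right. field. lra. }
  replace (lu - lv) with ((lu - aseq u n0) + (aseq u n0 - aseq v n0) - (lv - aseq v n0)) by ring.
  eapply Rle_lt_trans. apply Rabs_triang. rewrite Rabs_Ropp.
  eapply Rle_lt_trans. apply Rplus_le_compat_r. apply Rabs_triang. lra.
Qed.
End GreenA.

Ltac Cring2 :=
  repeat match goal with |- context [Csum ?n ?f] =>
     let c := fresh "cs" in set (c := Csum n f) in *; clearbody c; change Complex.C in c end;
  repeat match goal with |- context [peval ?a ?b ?x] =>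
     let c := fresh "cs" in set (c := peval a b x) in *; clearbody c; change Complex.C in c end;
  match goal with |- ?a = ?b => change (@eq Complex.C a b) end; ring.

Definition Psum (delta : nat) (pc : nat -> Cx) := sum_f_R0 (fun k => Cmod (pc k)) delta.

Lemma p_close dl pc z : pc (S dl) = Cx1 -> 1 <= Cmod z ->
  Cmod (peval (S dl) pc z - z ^ S dl)%C <= Psum (S dl) pc * Cmod z ^ dl.
Proof.
  intros Hm Hz. unfold peval. rewrite Csum_S, Hm. change Cmul with Cmult. change Cpow with Complex.Cpow.
  change Cx1 with (RtoC 1).
  replace (Csum dl (fun k => (pc k * z ^ k)%C) + 1 * z ^ S dl - z ^ S dl)%C with (Csum dl (fun k => (pc k * z ^ k)%C)) by Cring2.
  eapply Rle_trans. apply Csum_norm.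
  apply Rle_trans with (sum_f_R0 (fun k => Cmod (pc k)) dl * Cmod z ^ dl).
  rewrite <- sum_mul_r. apply sum_le_mono. intros k Hk. rewrite Cmod_mult, Cmod_pow.
  apply Rmult_le_compat_l. apply Cmod_ge_0. apply Rle_pow; auto.
  apply Rmult_le_compat_r. apply pow_le; pose proof (Cmod_ge_0 z); lra.
  unfold Psum. apply sum_le_S. apply Cmod_ge_0.
Qed.

Lemma Psum_ge1 dl pc : pc dl = Cx1 -> 1 <= Psum dl pc.
Proof.
  intros H. unfold Psum. eapply Rle_trans. 2: apply (sum_ge_term (fun k => Cmod (pc k)) dl dl).
  cbv beta. rewrite H. change Cx1 with (RtoC 1). rewrite Cmod_1. lra.
  intros; apply Cmod_ge_0. lia.
Qed.

Lemma p_grow dl pc z : (1 <= dl)%nat -> pc (S dl) = Cx1 -> 2 * Psum (S dl) pc <= Cmod z ->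
  Cmod z ^ S dl / 2 <= Cmod (peval (S dl) pc z) /\ Cmod z <= Cmod (peval (S dl) pc z).
Proof.
  intros Hdl Hm Hz. pose proof (Psum_ge1 (S dl) pc Hm). set (P := Psum (S dl) pc) in *.
  pose proof (p_close dl pc z Hm ltac:(lra)). fold P in H0.
  pose proof (Cmod_rev_tri (peval (S dl) pc z - z ^ S dl)%C (z ^ S dl)%C).
  replace (peval (S dl) pc z - z ^ S dl + z ^ S dl)%C with (peval (S dl) pc z) in H1 by Cring2.
  rewrite Cmod_pow in H1. simpl pow in H1 |- *.
  assert (0 <= Cmod z ^ dl) by (apply pow_le; lra).
  assert (Cmod z <= Cmod z ^ dl) by (rewrite <- (pow_1 (Cmod z)) at 1; apply Rle_pow; [lra|lia]).
  split; nra.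
Qed.

Lemma s_close dl pc z : pc (S dl) = Cx1 -> 1 <= Cmod z ->
  Cmod (peval (S dl) pc z * / z ^ S dl - 1)%C <= Psum (S dl) pc / Cmod z.
Proof.
  intros Hm Hz. assert (z <> RtoC 0) by (intro E; rewrite E, Cmod_0 in Hz; lra).
  assert (Hzn : (z ^ S dl)%C <> RtoC 0) by (apply Cpow_nz; auto).
  replace (peval (S dl) pc z * / z ^ S dl - 1)%C with ((peval (S dl) pc z - z ^ S dl) * / z ^ S dl)%C by (field; auto).
  rewrite Cmod_mult, Cmod_inv, Cmod_pow by auto.
  pose proof (p_close dl pc z Hm Hz).
  assert (0 < Cmod z ^ S dl) by (apply pow_lt; lra).
  apply Rle_trans with (Psum (S dl) pc * Cmod z ^ dl * / Cmod z ^ S dl).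
  apply Rmult_le_compat_r; auto. left; apply Rinv_0_lt_compat; auto.
  right. simpl. field. split; try lra. apply pow_nonzero; lra.
Qed.

Lemma fold_max_ge (l : list R) b x : In x l -> x <= fold_right Rmax b l.
Proof.
  induction l; simpl; intros H. contradiction.
  destruct H. subst. apply Rmax_l. eapply Rle_trans. apply IHl; auto. apply Rmax_r.
Qed.

Lemma alpha_ge delta gamma N d qc n m : (n <= N)%nat -> (m < d)%nat -> qc n m <> Cx0 ->
  (INR n - INR gamma) / (INR d - INR m) <= alpha_of delta gamma N d qc.
Proof.
  intros Hn Hm Hq. unfold alpha_of. apply fold_max_ge. apply in_flat_map. exists n. split.
  apply in_seq; lia. apply in_map_iff. exists m. split.
  destruct excluded_middle_informative; [contradiction|reflexivity]. apply in_seq; lia.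
Qed.

Lemma weight_gap (delta gamma N d : nat) (qc : nat -> nat -> Cx) (al : R) n m :
  (delta < d)%nat ->
  al * (INR delta - INR d) = INR gamma ->
  (forall n m, (n <= N)%nat -> (m < d)%nat -> qc n m <> Cx0 -> (INR n - INR gamma) / (INR d - INR m) <= al) ->
  (forall n, (gamma < n)%nat -> qc n d = Cx0) ->
  (n <= N)%nat -> (m <= d)%nat -> qc n m <> Cx0 ->
  INR n + al * INR m <> INR gamma + al * INR d ->
  INR n + al * INR m - (INR gamma + al * INR d) <= - / (INR d - INR delta).
Proof.
  intros Hdd Hal Hmax Hb Hn Hm Hq Hne.
  set (e := INR n + al * INR m - (INR gamma + al * INR d)).
  assert (Hdpos : 0 < INR d - INR delta) by (apply lt_INR in Hdd; lra).
  assert (He0 : e <= 0).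
  { destruct (Nat.eq_dec m d).
    - subst m. destruct (Compare_dec.le_lt_dec n gamma). apply le_INR in l. unfold e; lra.
      exfalso; apply Hq; auto.
    - assert (Hmd : (m < d)%nat) by lia. pose proof (Hmax n m Hn Hmd Hq).
      assert (0 < INR d - INR m) by (apply lt_INR in Hmd; lra).
      apply Rmult_le_compat_r with (r := INR d - INR m) in H. 2: lra.
      unfold Rdiv in H. rewrite Rmult_assoc, Rinv_l, Rmult_1_r in H by lra.
      unfold e. nra. }
  assert (He1 : e <> 0) by (unfold e; intro; apply Hne; lra).
  set (z0 := ((Z.of_nat n - Z.of_nat gamma) * (Z.of_nat d - Z.of_nat delta) - Z.of_nat gamma * (Z.of_nat m - Z.of_nat d))%Z).
  assert (Hz : IZR z0 = e * (INR d - INR delta)).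
  { unfold z0, e. rewrite minus_IZR, !mult_IZR, !minus_IZR, <- !INR_IZR_INZ.
    replace (INR gamma) with (al * (INR delta - INR d)) at 1 2 by exact Hal. ring_simplify.
    replace (INR gamma) with (al * (INR delta - INR d)) by exact Hal. ring. }
  assert (IZR z0 < 0) by (rewrite Hz; nra).
  apply lt_IZR in H. assert (z0 <= -1)%Z by lia. apply IZR_le in H0.
  rewrite Hz in H0.
  apply Rmult_le_reg_r with (INR d - INR delta). lra.
  replace (- / (INR d - INR delta) * (INR d - INR delta)) with (-1) by (field; lra). lra.
Qed.

Lemma Cpow_mul_distr (a b : Complex.C) m : ((a * b) ^ m = a ^ m * b ^ m)%C.
Proof. induction m; simpl. ring. rewrite IHm. ring. Qed.

Lemma Cexp_pow_scal r (Ln : Complex.C) m : (Cexp (Cscal r Ln) ^ m)%C = Cexp (Cscal (INR m * r) Ln).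
Proof. rewrite <- Cexp_nat, Cscal_assoc. reflexivity. Qed.

Lemma Csum_mul_r n c f : Csum n (fun k => f k * c)%C = (Csum n f * c)%C.
Proof.
  rewrite Cmult_comm, <- Csum_mul_l. apply Csum_ext. intros; apply Cmult_comm.
Qed.

Lemma rec_identity (gamma dl N d : nat) (qc : nat -> nat -> Cx) (Ln lam W : Complex.C) (al be : R) :
  be = - al -> al * (INR (S dl) - INR d) = INR gamma ->
  (Cexp (Cscal be (Cscal (INR (S dl)) Ln + lam)) * qeval N d qc (Cexp Ln) W)%C =
  (Cexp (Cscal be lam) * Csum N (fun i => Csum d (fun m =>
      qc i m * Cexp (Cscal (INR i + al * INR m - (INR gamma + al * INR d)) Ln) * (Cexp (Cscal be Ln) * W) ^ m)))%C.
Proof.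
  intros Hbe Hal. rewrite Cscal_add, Cscal_assoc, Cexp_add.
  unfold qeval.
  set (X := Cexp (Cscal (be * INR (S dl)) Ln)).
  transitivity (Cexp (Cscal be lam) * (X * Csum N (fun i => Csum d (fun m => Cmul (qc i m) (Cmul (Cpow (Cexp Ln) i) (Cpow W m))))))%C.
  { change Cx with Complex.C. ring. }
  f_equal. rewrite <- Csum_mul_l. apply Csum_ext. intros i _. rewrite <- Csum_mul_l. apply Csum_ext. intros m _.
  change Cmul with Cmult. change Cpow with Complex.Cpow.
  rewrite Cpow_mul_distr, Cexp_pow_scal, <- Cexp_nat. unfold X.
  replace (qc i m * Cexp (Cscal (INR i + al * INR m - (INR gamma + al * INR d)) Ln) *
     (Cexp (Cscal (INR m * be) Ln) * W ^ m))%C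
   with (qc i m * (Cexp (Cscal (INR i + al * INR m - (INR gamma + al * INR d)) Ln) *
     Cexp (Cscal (INR m * be) Ln)) * W ^ m)%C by (change Cx with Complex.C; ring).
  rewrite <- Cexp_add, <- Cscal_plus.
  replace (INR i + al * INR m - (INR gamma + al * INR d) + INR m * be) with (be * INR (S dl) + INR i)
    by (rewrite Hbe, <- Hal; ring).
  rewrite Cscal_plus, Cexp_add. change Cx with Complex.C. ring.
Qed.

Definition Bsum N d (qc : nat -> nat -> Cx) := sum_f_R0 (fun i => sum_f_R0 (fun m => Cmod (qc i m)) d) N.

Lemma heval_swap al gamma N d qc U :
  heval al gamma N d qc U = Csum N (fun i => Csum d (fun m =>
     (if Req_EM_T (INR i + al * INR m) (INR gamma + al * INR d) then qc i m else Cx0) * U ^ m))%C.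
Proof.
  rewrite Csum_swap. unfold heval. apply Csum_ext. intros m _. unfold hcoef.
  change Cmul with Cmult. change Cpow with Complex.Cpow. rewrite <- Csum_mul_r. reflexivity.
Qed.

Lemma QH_bound al gamma N d qc (Ln U : Complex.C) th : 0 <= th ->
  (forall i m, (i <= N)%nat -> (m <= d)%nat -> qc i m <> Cx0 ->
     INR i + al * INR m <> INR gamma + al * INR d ->
     Cmod (Cexp (Cscal (INR i + al * INR m - (INR gamma + al * INR d)) Ln)) <= th) ->
  Cmod (Csum N (fun i => Csum d (fun m =>
      qc i m * Cexp (Cscal (INR i + al * INR m - (INR gamma + al * INR d)) Ln) * U ^ m))%C
    - heval al gamma N d qc U)%C <= Bsum N d qc * (th * Mx U ^ d).
Proof.
  intros Hth HE. rewrite heval_swap. rewrite <- Csum_minus.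
  eapply Rle_trans. apply Csum_norm. unfold Bsum. rewrite <- sum_mul_r. apply sum_le_mono. intros i Hi.
  cbv beta. rewrite <- Csum_minus.
  eapply Rle_trans. apply Csum_norm. rewrite <- sum_mul_r. apply sum_le_mono. intros m Hm.
  cbv beta.
  assert (HUm : Cmod (U ^ m)%C <= Mx U ^ d).
  { rewrite Cmod_pow. apply Rle_trans with (Mx U ^ m). apply pow_incr. split. apply Cmod_ge_0. unfold Mx; lra.
    apply Rle_pow; auto. apply Mx_ge1. }
  assert (0 <= Mx U ^ d) by (apply pow_le; pose proof (Mx_ge1 U); lra).
  destruct (Req_EM_T (INR i + al * INR m) (INR gamma + al * INR d)) as [Heq|Hne].
  - rewrite Heq. replace (INR gamma + al * INR d - (INR gamma + al * INR d)) with 0 by ring.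
    rewrite Cscal_0, Cexp_0. replace (qc i m * 1 * U ^ m - qc i m * U ^ m)%C with (RtoC 0) by (change Cx with Complex.C; ring).
    rewrite Cmod_0. apply Rmult_le_pos. apply Cmod_ge_0. apply Rmult_le_pos; auto.
  - change Cx0 with (RtoC 0).
    replace (qc i m * Cexp (Cscal (INR i + al * INR m - (INR gamma + al * INR d)) Ln) * U ^ m - 0 * U ^ m)%C
      with (qc i m * Cexp (Cscal (INR i + al * INR m - (INR gamma + al * INR d)) Ln) * U ^ m)%C by (change Cx with Complex.C; ring).
    rewrite !Cmod_mult. destruct (classic (qc i m = Cx0)) as [Hq|Hq].
    + rewrite Hq. change Cx0 with (RtoC 0). rewrite Cmod_0. lra.
    + pose proof (HE i m Hi Hm Hq Hne). pose proof (Cmod_ge_0 (qc i m)).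
      pose proof (Cmod_ge_0 (Cexp (Cscal (INR i + al * INR m - (INR gamma + al * INR d)) Ln))).
      pose proof (Cmod_ge_0 (U ^ m)%C).
      rewrite Rmult_assoc. apply Rmult_le_compat_l; auto. apply Rmult_le_compat; auto.
Qed.

Definition sfun dl pc (z : Complex.C) k : Complex.C :=
  (piter (S dl) pc (S k) z * / (piter (S dl) pc k z) ^ (S dl))%C.
Fixpoint Lseq dl pc (z L : Complex.C) n : Complex.C :=
  match n with O => L | S k => (Cscal (INR (S dl)) (Lseq dl pc z L k) + clog (sfun dl pc z k))%C end.

Lemma Lseq_S dl pc z L k : Lseq dl pc z L (S k) = (Cscal (INR (S dl)) (Lseq dl pc z L k) + clog (sfun dl pc z k))%C.
Proof. reflexivity. Qed.

Lemma Un_cv_ext (f g : nat -> R) l : (forall n, f n = g n) -> Un_cv g l -> Un_cv f l.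
Proof. intros H Hg e He. destruct (Hg e He) as [N HN]. exists N. intros n Hn. rewrite H. auto. Qed.

Lemma orbit_facts dl pc (z L : Complex.C) : (1 <= dl)%nat -> pc (S dl) = Cx1 ->
  2 * Psum (S dl) pc <= Cmod z -> Cexp L = z ->
  forall n, Cmod z <= Cmod (piter (S dl) pc n z) /\
    Cmod (sfun dl pc z n - 1)%C <= Psum (S dl) pc / Cmod z /\
    Cexp (Lseq dl pc z L n) = piter (S dl) pc n z.
Proof.
  intros Hdl Hm Hz HL. pose proof (Psum_ge1 (S dl) pc Hm).
  assert (Hgrow : forall n, Cmod z <= Cmod (piter (S dl) pc n z)).
  { induction n. simpl; lra. simpl. eapply Rle_trans. exact IHn.
    apply (p_grow dl pc (piter (S dl) pc n z) Hdl Hm). lra. }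
  assert (Hs : forall n, Cmod (sfun dl pc z n - 1)%C <= Psum (S dl) pc / Cmod z).
  { intros n. unfold sfun. simpl piter at 1. pose proof (Hgrow n).
    eapply Rle_trans. apply s_close; auto. lra.
    unfold Rdiv. apply Rmult_le_compat_l. lra. apply Rinv_le_contravar; lra. }
  intros n. split; auto. split; auto.
  induction n. simpl; auto.
  rewrite Lseq_S, Cexp_add, Cexp_nat, IHn.
  destruct (clog_small (sfun dl pc z n) ltac:(pose proof (Hs n); unfold Rdiv in H0;
     assert (Psum (S dl) pc * / Cmod z <= 1/2) by (apply Rmult_le_reg_r with (Cmod z); [lra|];
       rewrite Rmult_assoc, Rinv_l by lra; lra); lra)) as [Hf _].
  rewrite Cexp_clog by auto. unfold sfun.
  assert (Hnz : piter (S dl) pc n z <> RtoC 0).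
  { intro E. pose proof (Hgrow n). rewrite E, Cmod_0 in H0. lra. }
  assert ((piter (S dl) pc n z ^ S dl)%C <> RtoC 0) by (apply Cpow_nz; auto).
  set (a := piter (S dl) pc n z) in *. set (b := piter (S dl) pc (S n) z) in *.
  clearbody a b. change Complex.C in a, b.
  match goal with |- ?x = ?y => change (@eq Complex.C x y) end. field. auto.
Qed.

Lemma exp_mono x y : x <= y -> exp x <= exp y.
Proof. intros. destruct (Req_dec x y). subst; lra. left; apply exp_increasing; lra. Qed.

Theorem proposition5p11
  (delta : nat) (pc : nat -> Cx)
  (N d gamma : nat) (qc : nat -> nat -> Cx)
  (Hdelta : (2 <= delta)%nat)
  (Hpmon : pc delta = Cx1)
  (Hpdeg : forall k, (delta < k)%nat -> pc k = Cx0)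
  (Hd : (2 <= d)%nat)
  (HqN : forall n m, (N < n)%nat -> qc n m = Cx0)
  (Hqd : forall n m, (d < m)%nat -> qc n m = Cx0)
  (Hbmon : qc gamma d = Cx1)
  (Hbdeg : forall n, (gamma < n)%nat -> qc n d = Cx0)
  (Hdd : (delta < d)%nat)
  (Hgamma : (1 <= gamma)%nat)
  (Halpha : alpha_of delta gamma N d qc = INR gamma / (INR delta - INR d)) :
  forall eps : R, 0 < eps ->
  exists Rad : R, 0 < Rad /\
    forall z w : Cx, Rad < Cnorm z ->
      forall L : Cx, Cexp L = z ->
      Rabs (Galpha (alpha_of delta gamma N d qc) delta pc N d qc z w
            - Gh (alpha_of delta gamma N d qc) gamma N d qc
                 (Cmul (Cexp (Cscal (- alpha_of delta gamma N d qc) L)) w)) < eps.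
Proof.
  intros eps Heps.
  destruct delta as [|dl]; [lia|].
  assert (Hdl : (1 <= dl)%nat) by lia.
  set (al := alpha_of (S dl) gamma N d qc) in *.
  assert (Hgap : 0 < INR d - INR (S dl)) by (apply lt_INR in Hdd; lra).
  assert (Hal : al * (INR (S dl) - INR d) = INR gamma).
  { rewrite Halpha. field. lra. }
  assert (HgN : (gamma <= N)%nat).
  { destruct (Compare_dec.le_lt_dec gamma N); auto. exfalso. pose proof (HqN gamma d l).
    rewrite Hbmon in H. unfold Cx1, Cx0 in H. injection H. lra. }
  set (hc := hcoef al gamma N d qc).
  assert (Hlead : hc d = Cx1).
  { unfold hc, hcoef. rewrite (Csum_single N gamma); auto.
    - cbv beta. destruct Req_EM_T as [E|E]; [exact Hbmon | exfalso; apply E; reflexivity].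
    - intros k Hk Hkg. cbv beta. destruct Req_EM_T as [E|E]; [|reflexivity].
      exfalso. apply Hkg. apply INR_eq. lra. }
  set (Hf := heval al gamma N d qc).
  set (A := Asum d hc). set (R0 := 2 * A + 2). set (K := A * (INR d * 2^d)).
  assert (HA : 0 <= A) by apply Asum_nonneg.
  assert (HK : 0 <= K).
  { unfold K. pose proof (pos_INR d). pose proof (pow_le 2 d ltac:(lra)). apply Rmult_le_pos; [lra|]. apply Rmult_le_pos; lra. }
  assert (Hbnd : forall u, Cmod (Hf u) <= A * Mx u ^ d) by (intros; exact (poly_bound d hc u)).
  assert (Hlow : forall u, R0 <= Cmod u -> Cmod u ^ d / 2 <= Cmod (Hf u)).
  { intros u Hu. unfold R0 in Hu. apply (poly_lower d hc u); [lia|exact Hlead|lra|unfold A in Hu; lra]. }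
  assert (Hlip : forall u v e, 0 <= e <= 1 -> Cmod (u - v)%C <= e * Mx v -> Cmod (Hf u - Hf v)%C <= K * e * Mx v ^ d).
  { intros u v e He Huv. pose proof (poly_lip d hc u v e He Huv). unfold K.
    replace (A * (INR d * 2^d) * e * Mx v ^ d) with (Asum d hc * (INR d * 2^d * e * Mx v ^ d)) by (unfold A; ring).
    exact H. }
  destruct (green_compare Hf d A R0 K Hd ltac:(unfold R0; lra) HA HK Hbnd Hlow Hlip eps Heps) as [eta [Heta Hcomp]].
  set (P := Psum (S dl) pc).
  pose proof (Psum_ge1 (S dl) pc Hpmon) as HP. fold P in HP.
  set (Bq := Bsum N d qc).
  assert (HBq : 0 <= Bq) by (apply sum_nonneg; intros; apply sum_nonneg; intros; apply Cmod_ge_0).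
  set (be := - al).
  set (th := Rmin (eta / (4 * (Bq + 1))) (1/2)).
  assert (Hth : 0 < th) by (apply Rmin_pos; [apply Rdiv_lt_0_compat; lra|lra]).
  assert (Hth1 : th <= 1/2) by apply Rmin_r.
  assert (Hth2 : th <= eta / (4 * (Bq + 1))) by apply Rmin_l.
  set (tau := Rmin 1 (eta / (2 * (A+1)))).
  assert (Htau : 0 < tau) by (apply Rmin_pos; [lra|apply Rdiv_lt_0_compat; lra]).
  assert (Htau1 : tau <= 1) by apply Rmin_l.
  assert (Htau2 : tau <= eta / (2 * (A+1))) by apply Rmin_r.
  set (gap := INR d - INR (S dl)) in *.
  set (Rad := 2 * P + 60 * (Rabs be + 1) * P / tau + exp (gap * (- ln th)) + 1).
  assert (Hc2pos : 0 <= 60 * (Rabs be + 1) * P / tau).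
  { apply Rmult_le_pos. pose proof (Rabs_pos be). nra. left; apply Rinv_0_lt_compat; lra. }
  pose proof (exp_pos (gap * (- ln th))).
  exists Rad. split. unfold Rad; lra.
  intros z w Hz L HL. rewrite Cnorm_Cmod in Hz.
  assert (Hz1 : 2 * P <= Cmod z) by (unfold Rad in Hz; lra).
  assert (Hz2 : 60 * (Rabs be + 1) * P / tau <= Cmod z) by (unfold Rad in Hz; lra).
  assert (Hz3 : gap * (- ln th) <= ln (Cmod z)).
  { rewrite <- (ln_exp (gap * (- ln th))). apply ln_mono. apply exp_pos. unfold Rad in Hz; lra. }
  assert (Hzpos : 2 <= Cmod z) by lra.
  pose proof (orbit_facts dl pc z L Hdl Hpmon Hz1 HL) as Hof.
  set (un := fun n => Cmul (Cexp (Cscal be (Lseq dl pc z L n))) (Qiter (S dl) pc N d qc n z w)).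
  assert (Hrec : forall n, Cmod (un (S n) - Hf (un n))%C <= eta * Mx (un n) ^ d).
  { intros n. destruct (Hof n) as [Hzn [Hsn HLn]].
    set (Ln := Lseq dl pc z L n) in *.
    set (lam := clog (sfun dl pc z n)).
    set (r := Cexp (Cscal be lam)).
    set (U := un n).
    set (ew := fun i m => INR i + al * INR m - (INR gamma + al * INR d)).
    set (Q := Csum N (fun i => Csum d (fun m => qc i m * Cexp (Cscal (ew i m) Ln) * U ^ m))%C).
    assert (HU : un (S n) = (r * Q)%C).
    { unfold un. rewrite Lseq_S. fold Ln. fold lam.
      change (Qiter (S dl) pc N d qc (S n) z w) with (qeval N d qc (piter (S dl) pc n z) (Qiter (S dl) pc N d qc n z w)).
      rewrite <- HLn. change Cmul with Cmult.
      rewrite (rec_identity gamma dl N d qc Ln lam (Qiter (S dl) pc N d qc n z w) al be eq_refl Hal).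
      reflexivity. }
    assert (HsP : P / Cmod z <= 1/2).
    { apply Rmult_le_reg_r with (Cmod z). lra. unfold Rdiv. rewrite Rmult_assoc, Rinv_l by lra. lra. }
    destruct (clog_small (sfun dl pc z n) ltac:(fold P in Hsn; lra)) as [_ Hlam].
    fold lam in Hlam.
    set (x := 6 * (Rabs be + 1) * P / Cmod z).
    assert (Hx : 10 * x <= tau).
    { unfold x. apply Rmult_le_reg_r with (Cmod z / tau). apply Rdiv_lt_0_compat; lra.
      replace (10 * (6 * (Rabs be + 1) * P / Cmod z) * (Cmod z / tau)) with (60 * (Rabs be + 1) * P / tau) by (field; lra).
      replace (tau * (Cmod z / tau)) with (Cmod z) by (field; lra). lra. }
    assert (Hbl : Cmod (Cscal be lam) <= x).
    { rewrite Cmod_Cscal. unfold x. fold P in Hsn.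
      pose proof (Rabs_pos be). pose proof (Cmod_ge_0 lam).
      apply Rle_trans with ((Rabs be + 1) * (6 * (P / Cmod z))).
      apply Rmult_le_compat; lra. right; unfold Rdiv; ring. }
    assert (Hr1 : Cmod (r - 1)%C <= tau).
    { unfold r. eapply Rle_trans. apply Cexp_near1. lra. lra. }
    assert (Hr2 : Cmod r <= 2).
    { replace r with ((r - 1) + 1)%C by ring. eapply Rle_trans. apply Cmod_triangle. rewrite Cmod_1. lra. }
    assert (HfstL : fst Ln = ln (Cmod (piter (S dl) pc n z))).
    { rewrite <- HLn, Cmod_Cexp, ln_exp. reflexivity. }
    assert (HQH : Cmod (Q - Hf U)%C <= Bq * (th * Mx U ^ d)).
    { apply QH_bound. lra. intros i m Hi Hm Hq Hne.
      pose proof (weight_gap (S dl) gamma N d qc al i m Hdd Hal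
        (fun n m H1 H2 H3 => alpha_ge (S dl) gamma N d qc n m H1 H2 H3) Hbdeg Hi Hm Hq Hne) as Hw.
      fold gap in Hw. rewrite Cmod_Cexp. simpl fst. rewrite HfstL.
      set (lz := ln (Cmod (piter (S dl) pc n z))).
      assert (Hlz : ln (Cmod z) <= lz) by (apply ln_mono; lra).
      assert (0 <= - ln th) by (pose proof (ln_le_0 th ltac:(lra)); lra).
      assert (0 <= gap * (- ln th)) by (apply Rmult_le_pos; lra).
      assert (Hig : 0 < / gap) by (apply Rinv_0_lt_compat; lra).
      rewrite <- (exp_ln th) by lra. apply exp_mono.
      set (e := INR i + al * INR m - (INR gamma + al * INR d)) in *.
      assert (0 <= lz) by lra.
      assert (Ha1 : e * lz <= - / gap * lz) by nra.
      assert (Ha2 : - / gap * lz <= - / gap * (gap * (- ln th))) by nra.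
      replace (- / gap * (gap * (- ln th))) with (ln th) in Ha2 by (field; lra). lra. }
    rewrite HU. pose proof (Hbnd U) as HbU. set (hu := Hf U) in *. clearbody hu. change Complex.C in hu.
    clearbody Q.
    replace (r * Q - hu)%C with (r * (Q - hu) + (r - 1) * hu)%C by ring.
    eapply Rle_trans. apply Cmod_triangle. rewrite !Cmod_mult.
    set (M := Mx U ^ d) in *.
    assert (HM : 0 <= M) by (apply pow_le; pose proof (Mx_ge1 U); lra).
    assert (Hq1 : Cmod r * Cmod (Q - hu)%C <= 2 * (Bq * (th * M))).
    { apply Rmult_le_compat; auto; try apply Cmod_ge_0. }
    assert (Hq2 : Cmod (r - 1)%C * Cmod hu <= tau * (A * M)).
    { apply Rmult_le_compat; auto; try apply Cmod_ge_0. }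
    assert (Hq3 : th * (4 * (Bq + 1)) <= eta).
    { apply Rle_trans with (eta / (4 * (Bq + 1)) * (4 * (Bq + 1))). apply Rmult_le_compat_r; lra. right; field; lra. }
    assert (Hq4 : tau * (2 * (A + 1)) <= eta).
    { apply Rle_trans with (eta / (2 * (A + 1)) * (2 * (A + 1))). apply Rmult_le_compat_r; lra. right; field; lra. }
    assert (Hq5 : 2 * (Bq * th) <= eta / 2) by nra.
    assert (Hq6 : tau * A <= eta / 2) by nra.
    assert (2 * (Bq * (th * M)) = 2 * (Bq * th) * M) by ring.
    assert (tau * (A * M) = (tau * A) * M) by ring.
    nra. }
  destruct (Hcomp un (fun n => hiter al gamma N d qc n (un O)) Hrec (fun n => eq_refl) eq_refl) as [lu [lv [Hlu [Hlv Hlt]]]].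
  assert (HG : Galpha al (S dl) pc N d qc z w = lu).
  { apply seq_lim_cv. eapply Un_cv_ext; [|exact Hlu]. intros n. unfold aseq, DD, lp. f_equal. f_equal.
    destruct (Hof n) as [_ [_ HLn]].
    rewrite !Cnorm_Cmod. unfold un. change Cmul with Cmult. rewrite Cmod_mult, Cmod_Cexp. simpl fst.
    unfold Rpower. rewrite <- HLn, Cmod_Cexp, ln_exp. unfold be.
    replace (- al * fst (Lseq dl pc z L n)) with (- (al * fst (Lseq dl pc z L n))) by ring.
    rewrite exp_Ropp. unfold Rdiv. ring. }
  assert (HGh : Gh al gamma N d qc (Cmul (Cexp (Cscal be L)) w) = lv).
  { apply seq_lim_cv. eapply Un_cv_ext; [|exact Hlv]. intros n. unfold aseq, DD, lp.
    rewrite Cnorm_Cmod. reflexivity. }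
  rewrite HG, HGh. exact Hlt.
Qed.
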